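(* There is no exhaustive strategy-proof PB algorithm $G$ and constant $\alpha>\frac{2}{3}$ such that $\min_{i\in N}u_i(G(I))\ge\alpha\cdot OPT(I)$ for every PB instance $I$ in which every project has cost $1$ and every approval vote is a knapsack vote (i.e., $c(A_i)\le b$ for all $i$). Here $OPT(I)=\max_{S\subseteq P,\,c(S)\le b}\min_{i\in N}u_i(S)$.
   Context: A PB instance is $I=\langle N,P,c,b,\mathcal{A}\rangle$ with voters $N=\{1,\dots,n\}$, projects $P$, costs $c:P\to\mathbb{N}$, budget $b\in\mathbb{N}$, and approval sets $A_i\subseteq P$. $c(S)=\sum_{p\in S}c(p)$; $S$ is feasible if $c(S)\le b$; $u_i(S)=c(S\cap A_i)$. A PB algorithm $G$ maps every instance to a single feasible set $G(I)$. $G$ is strategy-proof if for every instance, every voter $i$ and every $S\subseteq P$, $c(A_i\cap G(A_i,\mathcal{A}_{-i}))\ge c(A_i\cap G(S,\mathcal{A}_{-i}))$, where $(S,\mathcal{A}_{-i})$ denotes the profile obtained by replacing $A_i$ with $S$ and keeping all other votes and $N,P,c,b$ fixed. $G$ is exhaustive if for every instance $I$ and every $p\notin G(I)$, $c(p)+c(G(I))>b$. *)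

(* Defs.v *)
From HB Require Import structures.
From mathcomp Require Import all_boot all_order all_algebra.
From mathcomp Require Import reals.

Set Implicit Arguments.
Unset Strict Implicit.
Unset Printing Implicit Defensive.

Record instance := Inst {
  nv : nat;
  np : nat;
  cost : 'I_np -> nat;
  budget : nat;
  votes : 'I_nv -> {set 'I_np}
}.
Arguments cost : clear implicits.
Arguments budget : clear implicits.
Arguments votes : clear implicits.

Definition csum (I : instance) (S : {set 'I_(np I)}) : nat :=
  \sum_(p in S) cost I p.

Definition feasible (I : instance) (S : {set 'I_(np I)}) : bool :=
  csum S <= budget I.

Definition util (I : instance) (i : 'I_(nv I)) (S : {set 'I_(np I)}) : nat :=
  csum (S :&: votes I i).

(* min_{i in N} u_i(S) (the identity c(P) is an upper bound of every u_i(S),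
   so this is the true minimum whenever N is nonempty). *)
Definition minutil (I : instance) (S : {set 'I_(np I)}) : nat :=
  \big[minn/csum [set: 'I_(np I)]]_(i : 'I_(nv I)) util i S.

Definition OPT (I : instance) : nat :=
  \max_(S : {set 'I_(np I)} | feasible S) minutil S.

Definition deviate (I : instance) (i : 'I_(nv I)) (S : {set 'I_(np I)}) : instance :=
  @Inst (nv I) (np I) (cost I) (budget I)
        (fun j => if j == i then S else votes I j).

Definition algorithm := forall I : instance, {set 'I_(np I)}.

Definition is_PB_algorithm (G : algorithm) : Prop :=
  forall I, feasible (G I).

Definition strategy_proof (G : algorithm) : Prop :=
  forall (I : instance) (i : 'I_(nv I)) (S : {set 'I_(np I)}),
    csum (votes I i :&: G (deviate i S)) <= csum (votes I i :&: G I).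

Definition exhaustive (G : algorithm) : Prop :=
  forall (I : instance) (p : 'I_(np I)),
    p \notin G I -> budget I < cost I p + csum (G I).

Definition unit_costs (I : instance) : Prop := forall p, cost I p = 1.

Definition knapsack_votes (I : instance) : Prop :=
  forall i, csum (votes I i) <= budget I.

(* Main.v *)
Require Import Defs.
From HB Require Import structures.
From mathcomp Require Import all_boot all_order all_algebra.
From mathcomp Require Import reals.
From mathcomp Require Import lra.
Import Order.TTheory GRing.Theory Num.Theory.

Lemma csum_card (I : instance) (S : {set 'I_(np I)}) :
  unit_costs I -> csum S = #|S|.
Proof.
move=> H; rewrite /csum (eq_bigr (fun _ => 1%N)) ?sum1_card //.
Qed.

Lemma OPT_ge1 (I : instance) (T : {set 'I_(np I)}) :
  unit_costs I -> (0 < #|T|)%N -> (#|T| <= budget I)%N ->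
  (forall i, exists2 c, c \in T & c \in votes I i) ->
  (1 <= OPT I)%N.
Proof.
move=> Hu HT Hb Hc.
have Hf : feasible T by rewrite /feasible csum_card.
apply: leq_trans (leq_bigmax_cond _ Hf).
rewrite /minutil; apply: (big_ind (fun x => 1 <= x)%N).
- rewrite csum_card //; apply: leq_trans HT _.
  by rewrite subset_leq_card // subsetT.
- by move=> x y Hx Hy; rewrite leq_min Hx Hy.
- move=> i _; rewrite /util csum_card //.
  case: (Hc i) => c H1 H2.
  apply/card_gt0P; exists c; by rewrite inE H1 H2.
Qed.

Lemma in_G (G : algorithm) (R : realType) (alpha : R) (I : instance) (T : {set 'I_(np I)}) :
  (0 < alpha)%R ->
  (forall i : 'I_(nv I), (alpha * (OPT I)%:R <= (util i (G I))%:R)%R) ->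
  unit_costs I -> (0 < #|T|)%N -> (#|T| <= budget I)%N ->
  (forall i, exists2 c, c \in T & c \in votes I i) ->
  forall i x, votes I i = [set x] -> x \in G I.
Proof.
move=> Ha H Hu HT Hb Hc i x Hx.
have H1 := @OPT_ge1 I T Hu HT Hb Hc.
have : (0 < (util i (G I))%:R :> R)%R.
  apply: (lt_le_trans _ (H i)); apply: mulr_gt0 => //; by rewrite ltr0n.
rewrite ltr0n /util csum_card // Hx => /card_gt0P [y].
by rewrite !inE => /andP [Hy /eqP Hyx]; rewrite -Hyx.
Qed.

Definition pa : 'I_3 := @Ordinal 3 0 isT.
Definition pb : 'I_3 := @Ordinal 3 1 isT.
Definition pc : 'I_3 := @Ordinal 3 2 isT.

Definition V0 (j : 'I_3) : {set 'I_3} :=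
  if j == pa then [set pb; pc] else if j == pb then [set pa; pc] else [set pc].

Definition P0 : instance := @Inst 3 3 (fun _ => 1%N) 2 V0.

Lemma unitP0 : unit_costs P0. Proof. by []. Qed.

Lemma cardV0 j : (#|V0 j| <= 2)%N.
Proof.
rewrite /V0; case: ifP => _; first by rewrite cards2.
case: ifP => _; first by rewrite cards2.
by rewrite cards1.
Qed.

Lemma sub2 (A S : {set 'I_3}) : #|A| = 2%N -> (2 <= #|A :&: S|)%N -> A \subset S.
Proof.
move=> HA H.
have [Hle Heq] := subset_leqif_cards (subsetIl A S).
have /eqP E : A :&: S == A by rewrite -Heq eqn_leq Hle HA H.
by rewrite -E subsetIr.
Qed.

Local Open Scope ring_scope.

Theorem theorem5 (R : realType) :
  ~ exists (G : algorithm) (alpha : R),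
      [/\ is_PB_algorithm G, exhaustive G, strategy_proof G,
          2%:R / 3%:R < alpha &
          forall I : instance, unit_costs I -> knapsack_votes I ->
            forall i : 'I_(nv I),
              alpha * (OPT I)%:R <= (util i (G I))%:R].
Proof.
case=> G [alpha [Hfeas _ Hsp Halpha Hbound]].
have Ha : 0 < alpha by apply: lt_trans Halpha; rewrite divr_gt0 ?ltr0n.
pose P1 := @deviate P0 pa [set pb].
pose P2 := @deviate P0 pb [set pa].
have kn1 : knapsack_votes P1.
  move=> j; rewrite csum_card //= /P1 /deviate /=; case: ifP => _;
  by rewrite ?cards1 ?cardV0.
have kn2 : knapsack_votes P2.
  move=> j; rewrite csum_card //= /P2 /deviate /=; case: ifP => _;
  by rewrite ?cards1 ?cardV0.
have kn0 : knapsack_votes P0 by move=> j; rewrite csum_card // cardV0.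
have T1 : forall j, exists2 c, c \in [set pb; pc] & c \in votes P1 j.
  case=> [[|[|[|k]]] Hk] //.
  - by exists pb; rewrite !inE ?eqxx //=.
  - by exists pc; rewrite /= /V0 !inE ?eqxx ?orbT.
  - by exists pc; rewrite /= /V0 !inE ?eqxx ?orbT.
have T2 : forall j, exists2 c, c \in [set pa; pc] & c \in votes P2 j.
  case=> [[|[|[|k]]] Hk] //.
  - by exists pc; rewrite /= /V0 !inE ?eqxx ?orbT.
  - by exists pa; rewrite !inE ?eqxx //=.
  - by exists pc; rewrite /= /V0 !inE ?eqxx ?orbT.
have h1a : (0 < #|[set pb; pc]|)%N by rewrite cards2.
have h1b : (#|[set pb; pc]| <= 2)%N by rewrite cards2.
have h2a : (0 < #|[set pa; pc]|)%N by rewrite cards2.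
have h2b : (#|[set pa; pc]| <= 2)%N by rewrite cards2.
have g1 := @in_G G R alpha P1 [set pb; pc] Ha (Hbound P1 (fun _ => erefl) kn1) (fun _ => erefl) h1a h1b T1.
have g2 := @in_G G R alpha P2 [set pa; pc] Ha (Hbound P2 (fun _ => erefl) kn2) (fun _ => erefl) h2a h2b T2.
have b1 : pb \in G P1 by apply: (g1 pa).
have c1 : pc \in G P1 by apply: (g1 pc).
have a2 : pa \in G P2 by apply: (g2 pb).
have c2 : pc \in G P2 by apply: (g2 pc).
have sp1 := Hsp P0 pa [set pb].
have sp2 := Hsp P0 pb [set pa].
rewrite !csum_card // in sp1 sp2.
have e1 : [set pb; pc] :&: G P1 = [set pb; pc].
  by apply/setIidPl; apply/subsetP => x; rewrite !inE => /orP [] /eqP ->.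
have e2 : [set pa; pc] :&: G P2 = [set pa; pc].
  by apply/setIidPl; apply/subsetP => x; rewrite !inE => /orP [] /eqP ->.
rewrite /= /V0 /= in sp1 sp2.
rewrite -/P1 e1 cards2 /= in sp1.
rewrite -/P2 e2 cards2 /= in sp2.
have s1 := @sub2 [set pb; pc] (G P0) (cards2 pb pc) sp1.
have s2 := @sub2 [set pa; pc] (G P0) (cards2 pa pc) sp2.
have HT : G P0 = setT.
  apply/setP => x; rewrite inE.
  case: x => [[|[|[|k]]] Hk] //.
  - apply: (subsetP s2); rewrite !inE; apply/orP; left; apply/eqP; exact: val_inj.
  - apply: (subsetP s1); rewrite !inE; apply/orP; left; apply/eqP; exact: val_inj.
  - apply: (subsetP s1); rewrite !inE; apply/orP; right; apply/eqP; exact: val_inj.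
have := Hfeas P0; rewrite /feasible csum_card // HT cardsT card_ord.
by [].
Qed.
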